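(* Let $(S,\mathcal F,\mathcal L)$ be a $p$-local finite group. If every $\mathcal C_p$-element of $S$ lies in the center $Z_{\mathcal F}(S)$ of $\mathcal F$, then $(S,\mathcal F,\mathcal L)$ is nilpotent. In particular, if $p$ is odd and $\Omega_1(S)\subseteq Z_{\mathcal F}(S)$, or $p=2$ and $\Omega_2(S)\subseteq Z_{\mathcal F}(S)$, then $(S,\mathcal F,\mathcal L)$ is nilpotent.
   Context: An element $x\in S$ is a $\mathcal C_p$-element if $x^p=1$ when $p$ is odd, or $x^4=1$ when $p=2$. The center of $\mathcal F$ is $Z_{\mathcal F}(S)=\{x\in Z(S)\mid f(x)=x \text{ for every morphism } f \text{ of } \mathcal F^c\}$ (note $Z(S)\le P$ for every $\mathcal F$-centric $P$). $\Omega_i(S)$ is the subgroup of $S$ generated by all $x$ with $x^{p^i}=1$. Let $S$ be a finite $p$-group. For $P,Q\le S$, $\mathrm{Hom}_S(P,Q)$ is the set of maps $c_g\colon x\mapsto gxg^{-1}$ with $g\in S$, $gPg^{-1}\le Q$, and $\mathrm{Aut}_S(P)=\mathrm{Hom}_S(P,P)$. A fusion system $\mathcal F$ over $S$ is a category whose objects are the subgroups of $S$, with $\mathrm{Hom}_S(P,Q)\subseteq\mathrm{Hom}_{\mathcal F}(P,Q)\subseteq \mathrm{Inj}(P,Q)$, such that every morphism factors as an $\mathcal F$-isomorphism followed by an inclusion. Subgroups are $\mathcal F$-conjugate if they are isomorphic in $\mathcal F$. $P$ is fully centralized (resp. fully normalized) if $|C_S(P)|\ge |C_S(P')|$ (resp.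 $|N_S(P)|\ge|N_S(P')|$) for all $P'$ $\mathcal F$-conjugate to $P$. $\mathcal F$ is saturated if (I) every fully normalized $P$ is fully centralized and $\mathrm{Aut}_S(P)$ is a Sylow $p$-subgroup of $\mathrm{Aut}_{\mathcal F}(P)$, and (II) whenever $\phi\in\mathrm{Hom}_{\mathcal F}(P,S)$ with $\phi(P)$ fully centralized, $\phi$ extends to a morphism in $\mathcal F$ defined on $N_\phi=\{g\in N_S(P):\phi c_g\phi^{-1}\in \mathrm{Aut}_S(\phi(P))\}$. $P$ is $\mathcal F$-centric if $C_S(P')\le P'$ for all $P'$ $\mathcal F$-conjugate to $P$; $\mathcal F^c$ is the full subcategory on these. A centric linking system associated to $\mathcal F$ is a category $\mathcal L$ with objects the $\mathcal F$-centric subgroups, a functor $\pi\colon\mathcal L\to\mathcal F^c$ which is the identity on objects, and monomorphisms $\delta_P\colon P\to\mathrm{Aut}_{\mathcal L}(P)$, such that (A) $Z(P)$ (via $\delta_P$) acts freely on $\mathrm{Mor}_{\mathcal L}(P,Q)$ by composition and $\pi$ induces a bijection $\mathrm{Mor}_{\mathcal L}(P,Q)/Z(P)\to\mathrm{Hom}_{\mathcal F}(P,Q)$; (B) $\pi(\delta_P(g))=c_g$ for $g\in P$; (C) $f\circ\delta_P(g)=\delta_Q(\pi(f)(g))\circ f$ for $f\in\mathrm{Mor}_{\mathcal L}(P,Q)$, $g\in P$. A $p$-local finite group is a triple $(S,\mathcal F,\mathcal L)$ with $\mathcal F$ a saturated fusion system over $S$ and $\mathcal L$ an associated centric linking system.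 $(S,\mathcal F,\mathcal L)$ is called nilpotent if $\mathcal F=\mathcal F_S(S)$, the fusion system with $\mathrm{Hom}_{\mathcal F_S(S)}(P,Q)=\mathrm{Hom}_S(P,Q)$. *)

(* Defs.v *)
From mathcomp Require Import all_boot all_fingroup all_solvable.
Set Implicit Arguments. Unset Strict Implicit. Unset Printing Implicit Defensive.
Import GroupScope.
Local Open Scope group_scope.

Section PLocal.
Variable gT : finGroupType.

(* A fusion system is encoded by its Hom-sets: F P Q f means that the map
   P -> Q given by the restriction to P of f lies in Hom_F(P,Q).  Values of
   f outside P are irrelevant (extensionality axiom below). *)
Definition fsys := {set gT} -> {set gT} -> {ffun gT -> gT} -> bool.

Definition homS (S P Q : {set gT}) (f : {ffun gT -> gT}) : bool :=
  [exists g in S, ([set g * x * g^-1 | x in P] \subset Q)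
                  && [forall x in P, f x == g * x * g^-1]].

Definition injhom (P Q : {set gT}) (f : {ffun gT -> gT}) : Prop :=
  [/\ {in P &, {morph f : x y / x * y}}, {in P &, injective f}
    & {in P, forall x, f x \in Q}].

Definition fcomp (g f : {ffun gT -> gT}) : {ffun gT -> gT} := [ffun x => g (f x)].

Definition Fiso (F : fsys) (P Q : {set gT}) (f : {ffun gT -> gT}) : Prop :=
  F P Q f /\ exists h, [/\ F Q P h, {in P, cancel f h} & {in Q, cancel h f}].

Definition Fconj (F : fsys) (P Q : {set gT}) : Prop := exists f, Fiso F P Q f.

Definition fusion_system (S : {group gT}) (F : fsys) : Prop :=
  forall P Q R : {group gT}, P \subset S -> Q \subset S -> R \subset S ->
  [/\ (forall f g : {ffun gT -> gT}, {in P, f =1 g} -> F P Q f = F P Q g),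
      (forall f, homS S P Q f -> F P Q f),
      (forall f, F P Q f -> injhom P Q f),
      (forall f g : {ffun gT -> gT}, F P Q f -> F Q R g -> F P R (fcomp g f))
    & (forall f, F P Q f -> exists (T : {group gT}) psi,
          [/\ T \subset Q, Fiso F P T psi & {in P, f =1 psi}])].

Definition fully_centralized (S : {group gT}) (F : fsys) (P : {set gT}) : Prop :=
  forall P' : {group gT}, P' \subset S -> Fconj F P P' -> #|'C_S(P')| <= #|'C_S(P)|.

Definition fully_normalized (S : {group gT}) (F : fsys) (P : {set gT}) : Prop :=
  forall P' : {group gT}, P' \subset S -> Fconj F P P' -> #|'N_S(P')| <= #|'N_S(P)|.

Definition AutF (F : fsys) (P : {set gT}) : {set {perm gT}} :=
  [set a in Aut P | F P P [ffun x => a x]].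

Definition AutS (S P : {set gT}) : {set {perm gT}} :=
  [set a in Aut P | [exists g in 'N_S(P), [forall x in P, a x == g * x * g^-1]]].

(* N_phi = { g in N_S(P) | phi c_g phi^-1 in Aut_S(phi(P)) } *)
Definition Nphi (S P : {set gT}) (phi : {ffun gT -> gT}) : {set gT} :=
  [set g in 'N_S(P) | [exists h in 'N_S(phi @: P),
      [forall x in P, phi (g * x * g^-1) == h * phi x * h^-1]]].

Definition saturated (p : nat) (S : {group gT}) (F : fsys) : Prop :=
  fusion_system S F /\
  (forall P : {group gT}, P \subset S -> fully_normalized S F P ->
      fully_centralized S F P /\ p.-Sylow(AutF F P) (AutS S P)) /\
  (forall (P : {group gT}) (phi : {ffun gT -> gT}), P \subset S -> F P S phi ->
      fully_centralized S F (phi @: P) ->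
      exists psi, F (Nphi S P phi) S psi /\ {in P, psi =1 phi}).

Definition centric (S : {group gT}) (F : fsys) (P : {set gT}) : Prop :=
  forall P' : {group gT}, P' \subset S -> Fconj F P P' -> 'C_S(P') \subset P'.

Record linking_system (S : {group gT}) (F : fsys) := LinkingSystem {
  Mor : {set gT} -> {set gT} -> Type;
  idL : forall P, Mor P P;
  compL : forall P Q R, Mor Q R -> Mor P Q -> Mor P R;
  piL : forall P Q, Mor P Q -> {ffun gT -> gT};
  deltaL : forall P, gT -> Mor P P;
  _ : forall (P Q : {group gT}) (f : Mor P Q),
        P \subset S -> Q \subset S -> centric S F P -> centric S F Q ->
        compL f (idL P) = f /\ compL (idL Q) f = f;
  _ : forall (P Q R T : {group gT}) (f : Mor P Q) (g : Mor Q R) (h : Mor R T),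
        P \subset S -> Q \subset S -> R \subset S -> T \subset S ->
        centric S F P -> centric S F Q -> centric S F R -> centric S F T ->
        compL h (compL g f) = compL (compL h g) f;
  _ : forall P : {group gT}, P \subset S -> centric S F P ->
        {in P, forall x, piL (idL P) x = x};
  _ : forall (P Q R : {group gT}) (f : Mor P Q) (g : Mor Q R),
        P \subset S -> Q \subset S -> R \subset S ->
        centric S F P -> centric S F Q -> centric S F R ->
        {in P, piL (compL g f) =1 fcomp (piL g) (piL f)};
  _ : forall (P Q : {group gT}) (f : Mor P Q),
        P \subset S -> Q \subset S -> centric S F P -> centric S F Q ->
        F P Q (piL f);
  _ : forall P : {group gT}, P \subset S -> centric S F P ->
        [/\ deltaL P 1 = idL P,
            {in P &, forall g h, deltaL P (g * h) = compL (deltaL P g) (deltaL P h)}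
          & {in P &, injective (deltaL P)}];
  _ : forall (P Q : {group gT}) (f : Mor P Q),
        P \subset S -> Q \subset S -> centric S F P -> centric S F Q ->
        forall z, z \in 'Z(P) -> compL f (deltaL P z) = f -> z = 1;
  _ : forall (P Q : {group gT}) (phi : {ffun gT -> gT}),
        P \subset S -> Q \subset S -> centric S F P -> centric S F Q ->
        F P Q phi -> exists f : Mor P Q, {in P, piL f =1 phi};
  _ : forall (P Q : {group gT}) (f g : Mor P Q),
        P \subset S -> Q \subset S -> centric S F P -> centric S F Q ->
        ({in P, piL f =1 piL g} <-> exists2 z, z \in 'Z(P) & g = compL f (deltaL P z));
  _ : forall P : {group gT}, P \subset S -> centric S F P ->
        forall g, g \in P -> {in P, forall x, piL (deltaL P g) x = g * x * g^-1};
  _ : forall (P Q : {group gT}) (f : Mor P Q),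
        P \subset S -> Q \subset S -> centric S F P -> centric S F Q ->
        forall g, g \in P -> compL f (deltaL P g) = compL (deltaL Q (piL f g)) f
}.

Definition in_center (S : {group gT}) (F : fsys) (x : gT) : Prop :=
  x \in 'Z(S) /\
  forall (P Q : {group gT}) (f : {ffun gT -> gT}),
    P \subset S -> Q \subset S -> centric S F P -> centric S F Q ->
    F P Q f -> f x = x.

Definition Cp_elt (p : nat) (x : gT) : bool :=
  if p == 2 then x ^+ 4 == 1 else x ^+ p == 1.

Definition Omega (p i : nat) (S : {set gT}) : {set gT} :=
  <<[set x in S | x ^+ (p ^ i) == 1]>>.

Definition nilpotent_fs (S : {group gT}) (F : fsys) : Prop :=
  forall (P Q : {group gT}) f, P \subset S -> Q \subset S -> F P Q f = homS S P Q f.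

End PLocal.

(* Main.v *)
Require Import Defs.
From mathcomp Require Import all_boot all_fingroup all_solvable.
From Stdlib Require Import Classical.
From mathcomp Require Import zify.
Import GroupScope.
Set Implicit Arguments. Unset Strict Implicit. Unset Printing Implicit Defensive.

Section GroupLemma.
Variable gT : finGroupType.

Lemma aut_fix_critical p (Q K : {group gT}) (b : {perm gT}) :
  prime p -> p.-group Q -> b \in Aut Q -> p^'.-elt b ->
  K \char Q -> nil_class K <= 2 ->
  (forall x, x \in Q -> Cp_elt p x -> b x = x) ->
  forall y, y \in K -> b y = y.
Proof.
move=> pr_p pQ AutQb p'b chK clK fixCp.
have sKQ := char_sub chK.
have bK : forall x, x \in K -> b x \in K.
  move=> x Kx; have := forall_inP (andP chK).2 b AutQb.
  by move/subsetP; apply; apply: imset_f.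
have bM := morphicP (Aut_morphic AutQb).
have b1 : b 1 = 1 by rewrite fixCp // /Cp_elt !expg1n eqxx; case: ifP.
have bX : forall x k, x \in Q -> b (x ^+ k) = b x ^+ k.
  move=> x k Qx; elim: k => [|k IHk]; first by rewrite !expg0.
  by rewrite !expgS bM ?groupX // IHk.
have sK'Z : K^`(1) \subset 'Z(K) by rewrite -nil_class2.
move=> y; elim: {y}#[y] {-2}y (leqnn #[y]) => [|n IHn] y oy Ky.
  by move: (order_gt0 y); rewrite leqn0 in oy; rewrite (eqP oy).
have Qy := subsetP sKQ y Ky.
case Cpy: (Cp_elt p y); first exact: fixCp.
have py : p.-elt y := mem_p_elt pQ Qy.
have ny1 : y != 1 by apply: contraFN Cpy => /eqP->; rewrite /Cp_elt !expg1n eqxx; case: ifP.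
have pdy : p %| #[y].
  have [k ok] := p_natP py; move: ny1; rewrite -order_eq1 ok.
  by case: k {ok} => [|k] //= _; rewrite expnS dvdn_mulr.
have fyp : b (y ^+ p) = y ^+ p.
  apply: IHn; last by rewrite groupX.
  rewrite orderXdiv // -ltnS (leq_trans _ oy) // ltn_Pdiv ?prime_gt1 //.
set z' := b y.
have Kz : z' \in K by exact: bK.
have Qz : z' \in Q by exact: subsetP sKQ _ Kz.
have zp : z' ^+ p = y ^+ p.
  by rewrite -bX // fyp.
set u := y^-1 * z'.
have Ku : u \in K by rewrite groupM ?groupV.
set c := [~ z', y^-1].
have cZ : c \in 'Z(K).
  by apply: (subsetP sK'Z); apply: mem_commg; rewrite ?groupV.
have ccom : forall w, w \in K -> commute w c.
  move=> w Kw; case/centerP: cZ => _ /(_ w Kw); done.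
have cp : c ^+ p = 1.
  rewrite /c -commgX; last by apply: ccom; rewrite groupV.
  by rewrite expVgn -zp commgXVg.
have uE : forall m, u ^+ m = y ^- m * z' ^+ m * c ^+ 'C(m, 2).
  move=> m; rewrite /u /c expMg_Rmul ?expVgn //; apply: ccom; by rewrite ?groupV.
have Cpu : Cp_elt p u.
  rewrite /Cp_elt; case: eqP => [p2 | p2].
    rewrite uE.
    have -> : y ^- 4 * z' ^+ 4 = 1.
      by rewrite (_ : 4 = 2 * 2)%N // !expgM -p2 zp mulVg.
    have -> : 'C(4, 2) = (p * 3)%N by rewrite p2.
    by rewrite mul1g expgM cp expg1n.
  have odd_p : odd p.
    by case/even_prime: pr_p => [/p2|].
  by rewrite uE zp mulVg mul1g bin2odd // expgM cp expg1n.
have bu : b u = u by apply: fixCp; rewrite // (subsetP sKQ).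
have Qu : u \in Q by rewrite (subsetP sKQ).
have yu : z' = y * u by rewrite /u mulKVg.
have iter : forall j, (b ^+ j) y = y * u ^+ j.
  elim=> [|j IHj]; first by rewrite expg0 perm1 mulg1.
  by rewrite expgSr permM IHj bM ?groupX // bX // -/z' yu bu -mulgA -expgS.
have u1 : u ^+ #[b] = 1.
  by apply: (mulgI y); rewrite -iter expg_order perm1 mulg1.
have : #[u] = 1%N.
  apply: (@pnat_1 p); first exact: mem_p_elt pQ Qu.
  by apply: pnat_dvd p'b; rewrite order_dvdn u1.
move/eqP; rewrite order_eq1 => /eqP u1'.
by rewrite yu u1' mulg1.
Qed.

Lemma aut_p'_trivial p (Q : {group gT}) (b : {perm gT}) :
  prime p -> p.-group Q -> b \in Aut Q -> p^'.-elt b ->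
  (forall x, x \in Q -> Cp_elt p x -> b x = x) -> b = 1.
Proof.
move=> pr_p pQ AutQb p'b fixCp.
have [K critK] := Thompson_critical pQ.
have clK := critical_class2 critK.
have chK : K \char Q by case: critK.
have fixK := aut_fix_critical pr_p pQ AutQb p'b chK clK fixCp.
have CKb : b \in 'C(K | [Aut Q]).
  rewrite !inE /=; move: (AutQb); rewrite inE => /andP[-> ->] /=.
  apply/subsetP=> x Kx; rewrite inE; apply/eqP; exact: fixK.
have pb : p.-elt b := mem_p_elt (critical_p_stab_Aut critK pQ) CKb.
apply/eqP; rewrite -order_eq1; apply/eqP; exact: pnat_1 pb p'b.
Qed.

End GroupLemma.

Section Fusion.
Variables (gT : finGroupType) (p : nat) (S : {group gT}) (F : fsys gT).
Hypothesis fsF : fusion_system S F.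

Implicit Types P Q R T : {group gT}.
Implicit Types f psi : {ffun gT -> gT}.

Lemma Fext P Q f (g : {ffun gT -> gT}) : P \subset S -> Q \subset S -> {in P, f =1 g} -> F P Q f -> F P Q g.
Proof. by move=> sP sQ fg; case: (fsF sP sQ sQ) => ext _ _ _ _; rewrite (ext f g). Qed.

Lemma Fhom P Q f : P \subset S -> Q \subset S -> homS S P Q f -> F P Q f.
Proof. by move=> sP sQ; case: (fsF sP sQ sQ) => _ hom _ _ _; apply: hom. Qed.

Lemma Finj P Q f : P \subset S -> Q \subset S -> F P Q f -> injhom P Q f.
Proof. by move=> sP sQ; case: (fsF sP sQ sQ) => _ _ inj _ _; apply: inj. Qed.

Lemma Fcomp P Q R f (g : {ffun gT -> gT}) : P \subset S -> Q \subset S -> R \subset S ->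
  F P Q f -> F Q R g -> F P R (fcomp g f).
Proof. by move=> sP sQ sR; case: (fsF sP sQ sR) => _ _ _ comp _; apply: comp. Qed.

Lemma Fisoax P Q f : P \subset S -> Q \subset S -> F P Q f ->
  exists T psi, [/\ T \subset Q, Fiso F P T psi & {in P, f =1 psi}].
Proof. by move=> sP sQ; case: (fsF sP sQ sQ) => _ _ _ _ iso; apply: iso. Qed.

Lemma homS_conj P Q g f : g \in S -> {in P, forall x, f x = g * x * g^-1} ->
  (forall x, x \in P -> g * x * g^-1 \in Q) -> homS S P Q f.
Proof.
move=> Sg fE gPQ; apply/existsP; exists g; rewrite Sg /=; apply/andP; split.
  by apply/subsetP=> y /imsetP[x Px ->]; apply: gPQ.
by apply/forall_inP=> x Px; rewrite fE.
Qed.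

Lemma Fid P Q f : P \subset S -> Q \subset S -> P \subset Q -> {in P, forall x, f x = x} ->
  F P Q f.
Proof.
move=> sP sQ sPQ fE; apply: Fhom => //; apply: (@homS_conj _ _ 1) => //.
  by move=> x Px; rewrite fE // invg1 mulg1 mul1g.
by move=> x Px; rewrite invg1 mulg1 mul1g (subsetP sPQ).
Qed.

Definition idf : {ffun gT -> gT} := [ffun x => x].

Lemma Frestr P P' Q Q' f : P \subset S -> P' \subset S -> Q \subset S -> Q' \subset S ->
  P' \subset P -> Q \subset Q' -> F P Q f -> F P' Q' f.
Proof.
move=> sP sP' sQ sQ' sPP sQQ Ff.
have h1 : F P' P idf by apply: Fid => // x _; rewrite ffunE.
have h2 : F Q Q' idf by apply: Fid => // x _; rewrite ffunE.
have := Fcomp sP' sQ sQ' (Fcomp sP' sP sQ h1 Ff) h2.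
by apply: Fext => // x _; rewrite !ffunE.
Qed.

Lemma inj1 P Q f : injhom P Q f -> f 1 = 1.
Proof.
case=> fM _ _; apply: (@mulgI _ (f 1)); rewrite mulg1 -fM ?mulg1 //.
Qed.

Lemma injV P Q f x : injhom P Q f -> x \in P -> f x^-1 = (f x)^-1.
Proof.
move=> fi Px; case: (fi) => fM _ _; apply: (@mulgI _ (f x)).
by rewrite -fM ?groupV // mulgV (inj1 fi) mulgV.
Qed.

Lemma injcard P Q f : injhom P Q f -> #|P| <= #|Q|.
Proof.
case=> _ finj fPQ; rewrite -(card_in_imset finj); apply: subset_leq_card.
by apply/subsetP=> y /imsetP[x Px ->]; apply: fPQ.
Qed.

Lemma injimset P Q f : injhom P Q f -> #|Q| <= #|P| -> f @: P = Q.
Proof.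
move=> fi; case: (fi) => _ finj fPQ leQP; apply/eqP; rewrite eqEcard.
rewrite (card_in_imset finj) leQP andbT.
by apply/subsetP=> y /imsetP[x Px ->]; apply: fPQ.
Qed.

Lemma Fiso_card P T f : P \subset S -> T \subset S -> Fiso F P T f -> #|P| = #|T|.
Proof.
move=> sP sT [Ff [h [Fh _ _]]]; apply/eqP; rewrite eqn_leq.
by rewrite (injcard (Finj sP sT Ff)) (injcard (Finj sT sP Fh)).
Qed.

Lemma Fiso_refl P : P \subset S -> Fiso F P P idf.
Proof.
move=> sP; have Fi : F P P idf by apply: Fid => // x _; rewrite ffunE.
by split=> //; exists idf; split=> // x _; rewrite !ffunE.
Qed.

Lemma Fiso_trans P Q R f (g : {ffun gT -> gT}) : P \subset S -> Q \subset S -> R \subset S ->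
  Fiso F P Q f -> Fiso F Q R g -> Fiso F P R (fcomp g f).
Proof.
move=> sP sQ sR [Ff [f' [Ff' ff' f'f]]] [Fg [g' [Fg' gg' g'g]]].
split; first exact: Fcomp Ff Fg.
exists (fcomp f' g'); split; first exact: Fcomp Fg' Ff'.
  move=> x Px; rewrite !ffunE gg' ?ff' //.
  by case: (Finj sP sQ Ff) => _ _; apply.
move=> x Rx; rewrite !ffunE f'f ?g'g //.
by case: (Finj sR sQ Fg') => _ _; apply.
Qed.

Lemma Fconj_trans P Q R : P \subset S -> Q \subset S -> R \subset S ->
  Fconj F P Q -> Fconj F Q R -> Fconj F P R.
Proof. by move=> sP sQ sR [f fi] [g gi]; exists (fcomp g f); apply: Fiso_trans fi gi. Qed.

Lemma conj_norm (Q : {group gT}) g : (forall x, x \in Q -> g * x * g^-1 \in Q) -> g \in 'N(Q).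
Proof.
move=> gQ; rewrite -groupV; apply/normP/eqP; rewrite eqEcard cardJg leqnn andbT.
apply/subsetP=> y /imsetP[x Qx ->]; rewrite conjgE invgK mulgA; exact: gQ.
Qed.

Lemma normJ_mem (P : {set gT}) g x : g \in 'N(P) -> x \in P -> g * x * g^-1 \in P.
Proof.
move=> nPg Px; have := Px; rewrite -(memJ_norm x (groupVr nPg)).
by rewrite conjgE invgK mulgA.
Qed.

Lemma Nphi_group (P : {set gT}) f : group_set (Nphi S P f).
Proof.
apply/group_setP; split.
  rewrite inE group1; apply/existsP; exists 1; rewrite group1 /=.
  by apply/forall_inP=> x _; rewrite invg1 !mulg1 !mul1g.
move=> g1 g2 /setIdP[Ng1 /exists_inP[h1 Nh1 /forall_inP E1]].
move=> /setIdP[Ng2 /exists_inP[h2 Nh2 /forall_inP E2]].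
rewrite inE groupM //; apply/exists_inP; exists (h1 * h2); first by rewrite groupM.
apply/forall_inP=> x Px.
have Px' : g2 * x * g2^-1 \in P by apply: normJ_mem => //; case/setIP: Ng2.
have -> : g1 * g2 * x * (g1 * g2)^-1 = g1 * (g2 * x * g2^-1) * g1^-1.
  by rewrite invMg !mulgA.
rewrite (eqP (E1 _ Px')) (eqP (E2 _ Px)).
by rewrite invMg !mulgA.
Qed.

Lemma AutF_group (Q : {group gT}) : Q \subset S -> group_set (AutF F Q).
Proof.
move=> sQ; apply/group_setP; split.
  rewrite inE group1 /=; apply: Fid => // x _; rewrite ffunE perm1 //.
move=> a b /setIdP[Aa Fa] /setIdP[Ab Fb]; rewrite inE groupM //=.
have := Fcomp sQ sQ sQ Fa Fb; apply: Fext => // x _; by rewrite !ffunE permM.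
Qed.

Lemma AutS_group (Q : {group gT}) : group_set (AutS S Q).
Proof.
apply/group_setP; split.
  rewrite inE group1 /=; apply/exists_inP; exists 1; rewrite ?group1 //.
  by apply/forall_inP=> x _; rewrite perm1 invg1 mulg1 mul1g.
move=> a b /setIdP[Aa /exists_inP[ga Nga /forall_inP Ea]].
move=> /setIdP[Ab /exists_inP[gb Ngb /forall_inP Eb]].
rewrite inE groupM //=; apply/exists_inP; exists (gb * ga); first by rewrite groupM.
apply/forall_inP=> x Qx; rewrite permM (eqP (Ea _ Qx)) (eqP (Eb _ _)).
  by rewrite invMg !mulgA.
by apply: normJ_mem => //; case/setIP: Nga.
Qed.

Lemma perm_of (P : {group gT}) f : injhom P P f ->
  exists2 a : {perm gT}, a \in Aut P & {in P, forall x, a x = f x}.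
Proof.
case=> fM finj fP.
pose fa x := if x \in P then f x else x.
have fa_inj : injective fa.
  move=> x y; rewrite /fa; case: ifP => Px; case: ifP => Py.
  - by apply: finj.
  - by move=> fxy; move: (fP x Px); rewrite fxy Py.
  - by move=> fxy; move: (fP y Py); rewrite -fxy Px.
  - done.
exists (perm fa_inj); last by move=> x Px; rewrite permE /fa Px.
rewrite inE; apply/andP; split.
  apply/subsetP=> x; rewrite inE permE /fa; case: ifP => //; by rewrite eqxx.
apply/morphicP=> x y Px Py; rewrite !permE /fa groupM ?Px ?Py //; exact: fM.
Qed.

Hypothesis pr_p : prime p.
Hypothesis pS : p.-group S.
Hypothesis satI : forall P : {group gT}, P \subset S -> fully_normalized S F P ->
      fully_centralized S F P /\ p.-Sylow(AutF F P) (AutS S P).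
Hypothesis satII : forall (P : {group gT}) (phi : {ffun gT -> gT}), P \subset S -> F P S phi ->
      fully_centralized S F (phi @: P) ->
      exists psi, F (Nphi S P phi) S psi /\ {in P, psi =1 phi}.
Hypothesis Hcp : forall x, x \in S -> Cp_elt p x -> in_center S F x.

Lemma centric_case (Q : {group gT}) : Q \subset S -> fully_normalized S F Q -> centric S F Q ->
  forall f, F Q Q f -> exists2 h, h \in 'N_S(Q) & {in Q, forall x, f x = h * x * h^-1}.
Proof.
move=> sQ fnQ cQ f Ff.
have [_ syl] := satI sQ fnQ.
have pQ : p.-group Q := pgroupS sQ pS.
pose AFg := Group (AutF_group sQ); pose ASg := Group (AutS_group Q).
have pAF : p.-group AFg.
  apply/pgroupP=> q pr_q qd; have [x AFx oxq] := Cauchy pr_q qd.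
  have AFx' : x.`_p^' \in AFg.
    by apply: (subsetP _ _ (cycle_constt p^' x)); rewrite cycle_subG.
  have xp'1 : x.`_p^' = 1.
    apply: (aut_p'_trivial pr_p pQ); first by case/setIdP: AFx'.
      exact: p_elt_constt.
    move=> y Qy Cpy; have [_ fixy] := Hcp (subsetP sQ y Qy) Cpy.
    case/setIdP: AFx' => _ Fx'.
    by have := fixy Q Q _ sQ sQ cQ cQ Fx'; rewrite ffunE.
  have px : p.-elt x by rewrite -(consttC p x) xp'1 mulg1 p_elt_constt.
  by move: px; rewrite /p_elt oxq (pnatE _ pr_q).
have eqAS := pHall_id (syl : p.-Sylow(AFg) ASg) pAF.
have [a Aa aE] := perm_of (Finj sQ sQ Ff).
have AFa : a \in AFg.
  rewrite inE Aa /=; apply: (Fext sQ sQ _ Ff) => x Qx; by rewrite ffunE aE.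
rewrite -eqAS in AFa; case/setIdP: AFa => _ /exists_inP[h Nh /forall_inP hE].
by exists h => // x Qx; rewrite -aE // (eqP (hE x Qx)).
Qed.

Lemma fc_centric (Q : {group gT}) : Q \subset S -> fully_centralized S F Q ->
  'C_S(Q) \subset Q -> centric S F Q.
Proof.
move=> sQ fcQ sCQ Q' sQ' [f [Ff [h [Fh fh hf]]]].
have le1 := fcQ Q' sQ' (ex_intro _ f (conj Ff (ex_intro _ h (And3 Fh fh hf)))).
have le2 : #|'C_S(Q)| <= #|'Z(Q)|.
  by apply: subset_leq_card; rewrite subsetI sCQ subsetIr.
have [fM finj fQ] := Finj sQ sQ' Ff.
have [hM hinj hQ] := Finj sQ' sQ Fh.
have le3 : #|'Z(Q)| <= #|'Z(Q')|.
  have injZ : {in 'Z(Q) &, injective f}.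
    by move=> x y /setIP[Qx _] /setIP[Qy _]; apply: finj.
  rewrite -(card_in_imset injZ); apply: subset_leq_card.
  apply/subsetP=> y /imsetP[z /setIP[Qz cQz] ->]; rewrite inE fQ //=.
  apply/centP=> w Qw; rewrite -(hf w Qw).
  have Qhw := hQ w Qw.
  rewrite /commute -!fM //; congr (f _).
  by move/centP: cQz => /(_ _ Qhw).
have sZC : 'Z(Q') \subset 'C_S(Q') by rewrite subsetI subsetIr (subset_trans (center_sub _) sQ').
have eqZC : 'Z(Q') = 'C_S(Q').
  apply/eqP; rewrite eqEcard sZC /=.
  exact: leq_trans le1 (leq_trans le2 le3).
by rewrite -eqZC center_sub.
Qed.

Definition isconj (P : {set gT}) (f : {ffun gT -> gT}) :=
  exists2 g, g \in S & {in P, forall x, f x = g * x * g^-1}.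

Definition IHbig (k : nat) := forall R : {group gT}, R \subset S -> k < #|R| ->
  forall f, F R S f -> isconj R f.

Lemma autF_conj (Q : {group gT}) : IHbig #|Q| -> Q \subset S -> fully_normalized S F Q ->
  forall f, F Q Q f -> exists2 h, h \in 'N_S(Q) & {in Q, forall x, f x = h * x * h^-1}.
Proof.
move=> IH sQ fnQ; have [fcQ _] := satI sQ fnQ.
case: (boolP ('C_S(Q) \subset Q)) => [sCQ | nsCQ].
  by apply: centric_case => //; apply: fc_centric.
move=> f Ff; have fi := Finj sQ sQ Ff.
have [fM finj fQ] := fi.
have fQQ : f @: Q = Q := injimset fi (leqnn _).
have FS : F Q S f := Frestr sQ sQ sQ (subxx S) (subxx Q) sQ Ff.
have [psi [Fpsi epsi]] : exists psi, F (Nphi S Q f) S psi /\ {in Q, psi =1 f}.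
  by apply: satII sQ FS _; rewrite fQQ.
pose NG := Group (Nphi_group Q f).
have sNG : NG \subset S by apply/subsetP=> g /setIdP[/setIP[Sg _] _].
have QNG : Q \subset NG.
  apply/subsetP=> g Qg; rewrite inE inE (subsetP sQ) ?(subsetP (normG Q)) //=.
  apply/exists_inP; exists (f g).
    by rewrite fQQ inE (subsetP sQ) ?fQ ?(subsetP (normG Q)) ?fQ.
  apply/forall_inP=> x Qx; rewrite !fM ?groupM ?groupV //.
  by rewrite (injV fi Qg).
have CNG : 'C_S(Q) \subset NG.
  apply/subsetP=> g /setIP[Sg cQg]; rewrite inE inE Sg (subsetP (cent_sub Q)) //=.
  apply/exists_inP; exists 1; first by rewrite group1.
  apply/forall_inP=> x Qx; rewrite invg1 mulg1 mul1g.
  by move/centP: cQg => /(_ x Qx) ->; rewrite mulgK.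
have ltQN : #|Q| < #|NG|.
  apply: proper_card; rewrite properE QNG /=.
  by apply: contra nsCQ => sNQ; apply: subset_trans CNG sNQ.
have [g Sg gE] := IH NG sNG ltQN psi Fpsi.
have fE : {in Q, forall x, f x = g * x * g^-1}.
  by move=> x Qx; rewrite -epsi // gE // (subsetP QNG).
exists g => //; rewrite inE Sg /=; apply: conj_norm => x Qx.
by rewrite -fE // fQ.
Qed.

Lemma ext_lemma (T Q : {group gT}) chi : T \subset S -> Q \subset S ->
  fully_centralized S F Q ->
  (forall f, F Q Q f -> exists2 h, h \in 'N_S(Q) & {in Q, forall x, f x = h * x * h^-1}) ->
  F T Q chi -> #|Q| <= #|T| ->
  exists psi, F 'N_S(T) S psi /\ {in T, psi =1 chi}.
Proof.
move=> sT sQ fcQ AQ Fchi leQT.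
have ci := Finj sT sQ Fchi; have [cM cinj cQ] := ci.
have chiT : chi @: T = Q := injimset ci leQT.
have FS : F T S chi := Frestr sT sT sQ (subxx S) (subxx T) sQ Fchi.
have [psi [Fpsi epsi]] : exists psi, F (Nphi S T chi) S psi /\ {in T, psi =1 chi}.
  by apply: satII sT FS _; rewrite chiT.
have [T' [psi' [sT'Q [Fpsi' [h0 [Fh0 ph0 h0p]]] epsi']]] := Fisoax sT sQ Fchi.
have sT' : T' \subset S := subset_trans sT'Q sQ.
have T'Q : T' :=: Q.
  apply/eqP; rewrite eqEcard sT'Q /=.
  by rewrite -(Fiso_card sT sT' (conj Fpsi' (ex_intro _ h0 (And3 Fh0 ph0 h0p)))).
rewrite T'Q in Fh0.
have eqN : Nphi S T chi = 'N_S(T).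
  apply/eqP; rewrite eqEsubset; apply/andP; split.
    by apply/subsetP=> g /setIdP[].
  apply/subsetP=> g Ng; rewrite inE Ng /=.
  have [Sg nTg] := setIP Ng.
  pose cg : {ffun gT -> gT} := [ffun x => g * x * g^-1].
  have Fcg : F T T cg.
    apply: Fhom => //; apply: (homS_conj Sg) => [x _|x Tx]; first by rewrite ffunE.
    exact: normJ_mem.
  have Fa := Fcomp sQ sT sQ (Fcomp sQ sT sT Fh0 Fcg) Fchi.
  have [h Nh hE] := AQ _ Fa.
  apply/exists_inP; exists h; first by rewrite chiT.
  apply/forall_inP=> x Tx; apply/eqP.
  have := hE (chi x) (cQ x Tx); rewrite !ffunE (epsi' x Tx) (ph0 x Tx) -(epsi' x Tx).
  done.
by rewrite eqN in Fpsi; exists psi.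
Qed.

Lemma exists_fn (P : {group gT}) : P \subset S ->
  exists Q : {group gT}, [/\ Q \subset S, Fconj F P Q & fully_normalized S F Q].
Proof.
move=> sP.
suff H : forall n (Q0 : {group gT}), #|S| - #|'N_S(Q0)| <= n -> Q0 \subset S ->
    Fconj F P Q0 -> exists Q : {group gT}, [/\ Q \subset S, Fconj F P Q & fully_normalized S F Q].
  apply: (H #|S| P) => //; first by rewrite leq_subr.
  by exists idf; exact: Fiso_refl sP.
elim=> [|n IHn] Q0 le sQ0 cPQ0;
  (case: (classic (fully_normalized S F Q0)) => [fn|nfn]; first by exists Q0).
all: have [Q' [sQ' cQQ' lt]] : exists Q' : {group gT}, [/\ Q' \subset S, Fconj F Q0 Q' &
        #|'N_S(Q0)| < #|'N_S(Q')|];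
  first (apply: NNPP => H; apply: nfn => Q' sQ' c; rewrite leqNgt; apply/negP => lt;
         by apply: H; exists Q'; split).
all: have leN : #|'N_S(Q')| <= #|S| by apply: subset_leq_card; apply: subsetIl.
  exfalso; lia.
apply: (IHn Q') => //; first lia.
exact: Fconj_trans cPQ0 cQQ'.
Qed.

Lemma step (P : {group gT}) : IHbig #|P| -> P \subset S -> forall f, F P S f -> isconj P f.
Proof.
move=> IH sP phi Fphi.
have [Q [sQ [chi0 iso0] fnQ]] := exists_fn sP.
have [fcQ _] := satI sQ fnQ.
have cardQ : #|P| = #|Q| := Fiso_card sP sQ iso0.
have IHQ : IHbig #|Q| by rewrite -cardQ.
have AQ := autF_conj IHQ sQ fnQ.
case: (boolP (P \proper S)) => [ltPS | ].
  have [T [psi [sTS [Fpsi [psi' [Fpsi' ppsi' psi'p]]]] ephi]] := Fisoax sP (subxx S) Fphi.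
  have cardT : #|P| = #|T|.
    exact: Fiso_card sP sTS (conj Fpsi (ex_intro _ psi' (And3 Fpsi' ppsi' psi'p))).
  have [Fchi0 _] := iso0.
  have Fchi := Fcomp sTS sP sQ Fpsi' Fchi0.
  have le1 : #|Q| <= #|T| by rewrite -cardT cardQ.
  have le2 : #|Q| <= #|P| by rewrite cardQ.
  have [psi1 [Fpsi1 e1]] := ext_lemma sTS sQ fcQ AQ Fchi le1.
  have [psi2 [Fpsi2 e2]] := ext_lemma sP sQ fcQ AQ Fchi0 le2.
  have nilS := pgroup_nil pS.
  have ltTS : T \proper S.
    by rewrite properEcard sTS -cardT; rewrite properEcard in ltPS; case/andP: ltPS.
  have sNT : 'N_S(T) \subset S := subsetIl _ _.
  have sNP : 'N_S(P) \subset S := subsetIl _ _.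
  have ltNT : #|P| < #|'N_S(T)|.
    by rewrite cardT; apply: proper_card; apply: nilpotent_proper_norm.
  have ltNP : #|P| < #|'N_S(P)|.
    by apply: proper_card; apply: nilpotent_proper_norm.
  have [b Sb bE] := IH _ sNT ltNT _ Fpsi1.
  have [a Sa aE] := IH _ sNP ltNP _ Fpsi2.
  have TNT : T \subset 'N_S(T) by rewrite subsetI sTS normG.
  have PNP : P \subset 'N_S(P) by rewrite subsetI sP normG.
  exists (b^-1 * a); first by rewrite groupM ?groupV.
  move=> x Px; have [_ _ psiT] := Finj sP sTS Fpsi.
  have Tpx := psiT x Px.
  have eq1 : b * psi x * b^-1 = a * x * a^-1.
    rewrite -bE ?(subsetP TNT) // e1 // -aE ?(subsetP PNP) // e2 //.
    by rewrite !ffunE ppsi'.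
  have -> : phi x = b^-1 * (b * psi x * b^-1) * b.
    by rewrite ephi // !mulgA mulVg mul1g mulgKV.
  rewrite eq1.
  by rewrite invMg invgK !mulgA.
rewrite properEcard sP /= -leqNgt => leSP.
have cardSP : #|S| = #|P| by apply/eqP; rewrite eqn_leq leSP subset_leq_card.
have eqPS : P :=: S by apply/eqP; rewrite eqEcard sP cardSP /=.
have eqQS : Q :=: S by apply/eqP; rewrite eqEcard sQ -cardQ cardSP /=.
have FQ : F Q Q phi by rewrite eqQS; move: Fphi; rewrite eqPS.
have [h /setIP[Sh _] hE] := AQ _ FQ.
exists h => // x Px; apply: hE; move: Px; by rewrite eqQS eqPS.
Qed.

Lemma main_conj (P : {group gT}) : P \subset S -> forall f, F P S f -> isconj P f.
Proof.
suff H : forall n (P : {group gT}), #|S| - #|P| <= n -> P \subset S ->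
    forall f, F P S f -> isconj P f.
  by move=> sP; apply: (H #|S| P) => //; rewrite leq_subr.
elim=> [|n IHn] P0 le sP0; apply: step => // R sR lt.
  have h1 := subset_leq_card sR; have h2 := subset_leq_card sP0; exfalso; lia.
apply: IHn => //; have h1 := subset_leq_card sR; lia.
Qed.

Lemma nilp : nilpotent_fs S F.
Proof.
move=> P Q f sP sQ; apply/idP/idP => [Ff | ]; last exact: Fhom.
have [g Sg gE] := main_conj sP (Frestr sP sP sQ (subxx S) (subxx P) sQ Ff).
have [_ _ fQ] := Finj sP sQ Ff.
apply: (homS_conj Sg gE) => x Px; rewrite -gE //; exact: fQ.
Qed.

End Fusion.

Set Strict Implicit. Unset Implicit Arguments. Set Printing Implicit Defensive.

Theorem corollary7p6 (gT : finGroupType) (p : nat) (S : {group gT}) (F : fsys gT)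
  (L : linking_system S F) :
  prime p -> p.-group S -> saturated p S F ->
  ((forall x, x \in S -> Cp_elt p x -> in_center S F x) -> nilpotent_fs S F) /\
  (((odd p /\ forall x, x \in Omega p 1 S -> in_center S F x) \/
    (p = 2 /\ forall x, x \in Omega p 2 S -> in_center S F x)) -> nilpotent_fs S F).
Proof.
move=> pr_p pS [fsF [satI satII]].
have part1 : (forall x, x \in S -> Cp_elt p x -> in_center S F x) -> nilpotent_fs S F.
  by move=> Hcp; exact: (nilp fsF pr_p pS satI satII Hcp).
split=> //.
case=> [[odd_p HO] | [p2 HO]]; apply: part1 => x Sx Cpx; apply: HO; apply: mem_gen.
  rewrite inE Sx /=; move: Cpx; rewrite /Cp_elt.
  have -> : (p == 2) = false by apply/eqP => p2; rewrite p2 in odd_p.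
  by rewrite expn1.
rewrite inE Sx /=; move: Cpx; by rewrite /Cp_elt p2.
Qed.
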